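(* Let $\Delta\subseteq\mathbb{Q}^2$ be a Fano triangle of Gorenstein index $g$. If the reduced weight system of $\Delta$ is $(1,1,1)$, then $g$ is odd.
   Context: A Fano triangle is a 2-dimensional simplex with primitive vertices in $\mathbb{Z}^2$ and the origin in its interior; its Gorenstein index is the least $g\ge1$ with $g\Delta^*$ having integral vertices, $\Delta^*=\{u:\langle u,v\rangle\ge-1\ \forall v\in\Delta\}$. For vertices $v_0,v_1,v_2$, the weight system is $(q_0,q_1,q_2)$ with $q_i=|\det(v_j:j\ne i)|$, and its reduction is the tuple divided by $\gcd(q_0,q_1,q_2)$. *)

(* Defs.v *)
From mathcomp Require Import all_boot all_order all_algebra.
Set Implicit Arguments. Unset Strict Implicit. Unset Printing Implicit Defensive.
Import Order.TTheory GRing.Theory Num.Theory.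
Local Open Scope ring_scope.

Definition pt := (rat * rat)%type.
Definition lpt := (int * int)%type.

Definition ofZ (v : lpt) : pt := ((v.1)%:~R, (v.2)%:~R).
Definition dotp (u v : pt) : rat := u.1 * v.1 + u.2 * v.2.
Definition ptadd (u v : pt) : pt := (u.1 + v.1, u.2 + v.2).
Definition ptscale (t : rat) (u : pt) : pt := (t * u.1, t * u.2).

Definition primitive (v : lpt) : Prop := gcdz v.1 v.2 = 1%N.

Definition detZ (v w : lpt) : int := v.1 * w.2 - v.2 * w.1.

Definition triangle (v0 v1 v2 : lpt) (p : pt) : Prop :=
  exists a0 a1 a2 : rat, [/\ 0 <= a0, 0 <= a1, 0 <= a2, a0 + a1 + a2 = 1 &
    p = ptadd (ptscale a0 (ofZ v0)) (ptadd (ptscale a1 (ofZ v1)) (ptscale a2 (ofZ v2)))].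

Definition origin_in_interior (v0 v1 v2 : lpt) : Prop :=
  exists eps : rat, 0 < eps /\
    forall p : pt, `|p.1| < eps -> `|p.2| < eps -> triangle v0 v1 v2 p.

Definition fano_triangle (v0 v1 v2 : lpt) : Prop :=
  [/\ detZ (v1.1 - v0.1, v1.2 - v0.2) (v2.1 - v0.1, v2.2 - v0.2) != 0,
      primitive v0, primitive v1, primitive v2 & origin_in_interior v0 v1 v2].

Definition dual_set (v0 v1 v2 : lpt) (u : pt) : Prop :=
  forall v : pt, triangle v0 v1 v2 v -> -1 <= dotp u v.

Definition dilate (g : nat) (S : pt -> Prop) (p : pt) : Prop :=
  exists u, S u /\ p = ptscale g%:R u.

Definition is_vertex (S : pt -> Prop) (u : pt) : Prop :=
  S u /\ ~ (exists a b : pt, exists t : rat,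
             [/\ S a, S b, a <> b, 0 < t < 1 &
                 u = ptadd (ptscale t a) (ptscale (1 - t) b)]).

Definition integral_pt (p : pt) : Prop :=
  p.1 \is a Num.int /\ p.2 \is a Num.int.

Definition has_integral_vertices (S : pt -> Prop) : Prop :=
  forall u, is_vertex S u -> integral_pt u.

Definition gorenstein_index (v0 v1 v2 : lpt) (g : nat) : Prop :=
  [/\ (1 <= g)%N, has_integral_vertices (dilate g (dual_set v0 v1 v2)) &
      forall h : nat, (1 <= h)%N -> has_integral_vertices (dilate h (dual_set v0 v1 v2)) ->
        (g <= h)%N].

Definition weights (v0 v1 v2 : lpt) : nat * nat * nat :=
  (`|detZ v1 v2|%N, `|detZ v0 v2|%N, `|detZ v0 v1|%N).

Definition reduced_weights (v0 v1 v2 : lpt) : nat * nat * nat :=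
  let: (q0, q1, q2) := weights v0 v1 v2 in
  let d := gcdn (gcdn q0 q1) q2 in (q0 %/ d, q1 %/ d, q2 %/ d)%N.

(* Main.v *)
Require Import Defs.
From mathcomp Require Import all_boot all_order all_algebra.
From mathcomp Require Import zify ring lra.
Set Implicit Arguments. Unset Strict Implicit. Unset Printing Implicit Defensive.
Import Order.TTheory GRing.Theory Num.Theory.
Local Open Scope ring_scope.
Definition al (X Y : rat) (p : pt) : rat := p.1 * X + p.2 * Y.
Definition Kset (X0 Y0 X1 Y1 h : rat) (p : pt) : Prop :=
  [/\ -h <= al X0 Y0 p, -h <= al X1 Y1 p & al X0 Y0 p + al X1 Y1 p <= h].
Definition Mp (X0 Y0 X1 Y1 a b : rat) : pt :=
  ((a * Y1 - b * Y0) / (X0 * Y1 - Y0 * X1), (b * X0 - a * X1) / (X0 * Y1 - Y0 * X1)).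

Lemma alM0 X0 Y0 X1 Y1 a b : X0 * Y1 - Y0 * X1 != 0 -> al X0 Y0 (Mp X0 Y0 X1 Y1 a b) = a.
Proof. move=> hD; rewrite /al /Mp /=; field. exact: hD. Qed.
Lemma alM1 X0 Y0 X1 Y1 a b : X0 * Y1 - Y0 * X1 != 0 -> al X1 Y1 (Mp X0 Y0 X1 Y1 a b) = b.
Proof. move=> hD; rewrite /al /Mp /=; field. exact: hD. Qed.
Lemma Mal X0 Y0 X1 Y1 p : X0 * Y1 - Y0 * X1 != 0 ->
  p = Mp X0 Y0 X1 Y1 (al X0 Y0 p) (al X1 Y1 p).
Proof. move=> hD; case: p => p1 p2; rewrite /al /Mp /=; congr (_, _); field; exact: hD. Qed.
Lemma al_comb X Y t a b : al X Y (ptadd (ptscale t a) (ptscale (1 - t) b)) = t * al X Y a + (1 - t) * al X Y b.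
Proof. rewrite /al /ptadd /ptscale /=; ring. Qed.

Lemma nonvert X0 Y0 X1 Y1 h p e d1 d2 : X0 * Y1 - Y0 * X1 != 0 ->
  0 < e -> (d1 != 0) || (d2 != 0) ->
  [/\ -h <= (al X0 Y0 p) + e * d1, -h <= (al X1 Y1 p) + e * d2 & (al X0 Y0 p) + e * d1 + ((al X1 Y1 p) + e * d2) <= h] ->
  [/\ -h <= (al X0 Y0 p) - e * d1, -h <= (al X1 Y1 p) - e * d2 & (al X0 Y0 p) - e * d1 + ((al X1 Y1 p) - e * d2) <= h] ->
  ~ is_vertex (Kset X0 Y0 X1 Y1 h) p.
Proof.
move=> hD he hd Hp Hm [_ []].
set A := al X0 Y0 p in Hp Hm *. set B := al X1 Y1 p in Hp Hm *.
exists (Mp X0 Y0 X1 Y1 (A + e * d1) (B + e * d2)), (Mp X0 Y0 X1 Y1 (A - e * d1) (B - e * d2)), (1/2).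
split.
- by rewrite /Kset alM0 // alM1.
- by rewrite /Kset alM0 // alM1.
- move=> E.
  have E0 := congr1 (al X0 Y0) E; have E1 := congr1 (al X1 Y1) E.
  rewrite !alM0 // in E0; rewrite !alM1 // in E1.
  case/orP: hd => hd.
  + have : e * d1 = 0 by lra.
    by move/eqP; rewrite mulf_eq0 (negPf hd) orbF => /eqP h0; move: he; rewrite h0 ltxx.
  + have : e * d2 = 0 by lra.
    by move/eqP; rewrite mulf_eq0 (negPf hd) orbF => /eqP h0; move: he; rewrite h0 ltxx.
- by apply/andP; split; lra.
- rewrite {1}(Mal p hD) /Mp /ptadd /ptscale /= -/A -/B; congr (_, _); field; exact: hD.
Qed.

Lemma classify X0 Y0 X1 Y1 h p : X0 * Y1 - Y0 * X1 != 0 -> 0 < h ->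
  is_vertex (Kset X0 Y0 X1 Y1 h) p ->
  ((al X0 Y0 p) = -h /\ (al X1 Y1 p) = -h) \/ ((al X0 Y0 p) = 2 * h /\ (al X1 Y1 p) = -h) \/ ((al X0 Y0 p) = -h /\ (al X1 Y1 p) = 2 * h).
Proof.
move=> hD hh V.
have V' := V; case: V' => [[hA hB hAB] _].
have [lt|ge] := ltrP ((al X0 Y0 p) + (al X1 Y1 p)) h.
- have [ltA|geA] := ltrP (-h) (al X0 Y0 p).
  + have [c|c] := lerP ((al X0 Y0 p) + h) (h - (al X0 Y0 p) - (al X1 Y1 p)).
    * exfalso; apply: (nonvert (e := (al X0 Y0 p) + h) (d1 := 1) (d2 := 0) hD) V => //; try lra; try (by rewrite ?oner_eq0 ?orbT); split; lra.
    * exfalso; apply: (nonvert (e := h - (al X0 Y0 p) - (al X1 Y1 p)) (d1 := 1) (d2 := 0) hD) V => //; try lra; try (by rewrite ?oner_eq0 ?orbT); split; lra.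
  + have [ltB|geB] := ltrP (-h) (al X1 Y1 p).
    * have [c|c] := lerP ((al X1 Y1 p) + h) (h - (al X0 Y0 p) - (al X1 Y1 p)).
      -- exfalso; apply: (nonvert (e := (al X1 Y1 p) + h) (d1 := 0) (d2 := 1) hD) V => //; try lra; try (by rewrite ?oner_eq0 ?orbT); split; lra.
      -- exfalso; apply: (nonvert (e := h - (al X0 Y0 p) - (al X1 Y1 p)) (d1 := 0) (d2 := 1) hD) V => //; try lra; try (by rewrite ?oner_eq0 ?orbT); split; lra.
    * left; split; lra.
- have [ltA|geA] := ltrP (-h) (al X0 Y0 p).
  + have [ltB|geB] := ltrP (-h) (al X1 Y1 p).
    * have [c|c] := lerP ((al X0 Y0 p) + h) ((al X1 Y1 p) + h).
      -- exfalso; apply: (nonvert (e := (al X0 Y0 p) + h) (d1 := 1) (d2 := -1) hD) V => //; try lra; try (by rewrite ?oner_eq0 ?orbT); split; lra.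
      -- exfalso; apply: (nonvert (e := (al X1 Y1 p) + h) (d1 := 1) (d2 := -1) hD) V => //; try lra; try (by rewrite ?oner_eq0 ?orbT); split; lra.
    * right; left; split; lra.
  + right; right; split; lra.
Qed.

Lemma isvert X0 Y0 X1 Y1 h p : X0 * Y1 - Y0 * X1 != 0 -> 0 < h ->
  let A := al X0 Y0 p in let B := al X1 Y1 p in
  (A = -h /\ B = -h) \/ (A = 2 * h /\ B = -h) \/ (A = -h /\ B = 2 * h) ->
  is_vertex (Kset X0 Y0 X1 Y1 h) p.
Proof.
move=> hD hh A B H; split.
  by rewrite /Kset -/A -/B; case: H => [[-> ->]|[[-> ->]|[-> ->]]]; split; lra.
move=> [a [b [t [[ha1 ha2 ha3] [hb1 hb2 hb3] neq /andP[t0 t1] E]]]].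
apply: neq.
have EA : A = t * al X0 Y0 a + (1 - t) * al X0 Y0 b by rewrite /A E al_comb.
have EB : B = t * al X1 Y1 a + (1 - t) * al X1 Y1 b by rewrite /B E al_comb.
suff [h1 h2] : al X0 Y0 a = al X0 Y0 b /\ al X1 Y1 a = al X1 Y1 b.
  by rewrite (Mal a hD) (Mal b hD) h1 h2.
case: H => [[HA HB]|[[HA HB]|[HA HB]]]; split; nra.
Qed.

Lemma tri_vert0 (v0 v1 v2 : lpt) : triangle v0 v1 v2 (ofZ v0).
Proof. exists 1, 0, 0; split => //; rewrite /ptadd /ptscale /=; congr (_,_); ring. Qed.
Lemma tri_vert1 (v0 v1 v2 : lpt) : triangle v0 v1 v2 (ofZ v1).
Proof. exists 0, 1, 0; split => //; rewrite /ptadd /ptscale /=; congr (_,_); ring. Qed.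
Lemma tri_vert2 (v0 v1 v2 : lpt) : triangle v0 v1 v2 (ofZ v2).
Proof. exists 0, 0, 1; split => //; rewrite /ptadd /ptscale /=; congr (_,_); ring. Qed.

Lemma dual_iff (v0 v1 v2 : lpt) u : dual_set v0 v1 v2 u <->
  [/\ -1 <= dotp u (ofZ v0), -1 <= dotp u (ofZ v1) & -1 <= dotp u (ofZ v2)].
Proof.
split.
  by move=> H; split; apply: H; [apply: tri_vert0|apply: tri_vert1|apply: tri_vert2].
move=> [h0 h1 h2] v [a0 [a1 [a2 [ha0 ha1 ha2 hs ->]]]].
have e : dotp u (ptadd (ptscale a0 (ofZ v0)) (ptadd (ptscale a1 (ofZ v1)) (ptscale a2 (ofZ v2))))
  = a0 * dotp u (ofZ v0) + a1 * dotp u (ofZ v1) + a2 * dotp u (ofZ v2).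
  by rewrite /dotp /ptadd /ptscale /=; ring.
rewrite e.
have := mulr_ge0 ha0 (_ : 0 <= dotp u (ofZ v0) + 1).
have := mulr_ge0 ha1 (_ : 0 <= dotp u (ofZ v1) + 1).
have := mulr_ge0 ha2 (_ : 0 <= dotp u (ofZ v2) + 1).
move=> p2 p1 p0.
have := p0 ltac:(lra); have := p1 ltac:(lra); have := p2 ltac:(lra).
lra.
Qed.

Lemma dilate_iff (v0 v1 v2 : lpt) (h : nat) p : (1 <= h)%N ->
  v2 = (- v0.1 - v1.1, - v0.2 - v1.2) ->
  dilate h (dual_set v0 v1 v2) p <->
  Kset (v0.1)%:~R (v0.2)%:~R (v1.1)%:~R (v1.2)%:~R h%:R p.
Proof.
move=> h1 hv2.
have hpos : (0 : rat) < h%:R by rewrite ltr0n.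
have d2 : forall u, dotp u (ofZ v2) = - (dotp u (ofZ v0) + dotp u (ofZ v1)).
  by move=> u; rewrite hv2 /dotp /ofZ /= !rmorphB /= !rmorphN /=; ring.
split.
- move=> [u [/dual_iff [u0 u1 u2] ->]]; rewrite /Kset /al /=.
  rewrite d2 in u2; move: u0 u1 u2; rewrite /dotp /ofZ /= => u0 u1 u2.
  split; nra.
- move=> [k0 k1 k2]; exists (ptscale (h%:R)^-1 p); split.
    apply/dual_iff; rewrite d2; move: k0 k1 k2; rewrite /al /dotp /ofZ /ptscale /= => k0 k1 k2.
    have hi : 0 < (h%:R : rat)^-1 by rewrite invr_gt0.
    have e : h%:R * (h%:R : rat)^-1 = 1 by rewrite mulfV // gt_eqF.
    split; nra.
  rewrite /ptscale /=; case: p {k0 k1 k2} => p1 p2 /=; congr (_,_); field; rewrite gt_eqF //.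
Qed.

Lemma weights_eq (v0 v1 v2 : lpt) : reduced_weights v0 v1 v2 = (1, 1, 1)%N ->
  [/\ (absz (Defs.detZ v1 v2)) = (absz (Defs.detZ v0 v1)), (absz (Defs.detZ v0 v2)) = (absz (Defs.detZ v0 v1)) & (0 < `|Defs.detZ v0 v1|)%N].
Proof.
rewrite /reduced_weights /weights.
set q0 := (absz (Defs.detZ v1 v2)); set q1 := (absz (Defs.detZ v0 v2)); set q2 := (absz (Defs.detZ v0 v1)).
set d := gcdn (gcdn q0 q1) q2.
case=> e0 e1 e2.
have dq0 : (d %| q0)%N by rewrite /d (dvdn_trans (dvdn_gcdl _ _)) // dvdn_gcdl.
have dq1 : (d %| q1)%N by rewrite /d (dvdn_trans (dvdn_gcdl _ _)) // dvdn_gcdr.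
have dq2 : (d %| q2)%N by rewrite /d dvdn_gcdr.
have f0 : q0 = d by rewrite -(divnK dq0) e0 mul1n.
have f1 : q1 = d by rewrite -(divnK dq1) e1 mul1n.
have f2 : q2 = d by rewrite -(divnK dq2) e2 mul1n.
split; try congruence.
rewrite f2 lt0n; apply/eqP => d0; move: e0; rewrite d0 divn0.
by [].
Qed.

Lemma origin_sum (v0 v1 v2 : lpt) :
  (absz (Defs.detZ v1 v2)) = (absz (Defs.detZ v0 v1)) -> (absz (Defs.detZ v0 v2)) = (absz (Defs.detZ v0 v1)) -> (0 < `|Defs.detZ v0 v1|)%N ->
  origin_in_interior v0 v1 v2 ->
  v2 = (- v0.1 - v1.1, - v0.2 - v1.2).
Proof.
move=> E1 E2 pos [eps [heps /(_ (0,0))]].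
rewrite normr0 => /(_ heps heps) [a0 [a1 [a2 [ha0 ha1 ha2 hs E]]]].
case: E => Ex Ey.
move: v0 v1 v2 E1 E2 pos Ex Ey => [x0 y0] [x1 y1] [x2 y2] /=.
rewrite /Defs.detZ /= => E1 E2 pos Ex Ey.
set X0 : rat := x0%:~R in Ex Ey; set Y0 : rat := y0%:~R in Ex Ey.
set X1 : rat := x1%:~R in Ex Ey; set Y1 : rat := y1%:~R in Ex Ey.
set X2 : rat := x2%:~R in Ex Ey; set Y2 : rat := y2%:~R in Ex Ey.
have cast : forall m n : int, `|m|%N = `|n|%N -> `|(m%:~R : rat)| = `|n%:~R|.
  by move=> m n mn; rewrite -!intr_norm -!abszE mn.
have N1 := cast _ _ E1; have N2 := cast _ _ E2.
rewrite !rmorphB !rmorphM /= -/X0 -/X1 -/X2 -/Y0 -/Y1 -/Y2 in N1 N2.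
have D0 : `|(X0 * Y1 - Y0 * X1)| != 0.
  rewrite normr_eq0 /X0 /X1 /Y0 /Y1 -!rmorphM -rmorphB /= intr_eq0.
  by rewrite -absz_eq0 -lt0n.
have r1 : a0 * (X0 * Y1 - Y0 * X1) = a2 * (X1 * Y2 - Y1 * X2).
  have : a0 * (X0 * Y1 - Y0 * X1) + a2 * (X2 * Y1 - Y2 * X1) = 0.
    have -> : a0 * (X0 * Y1 - Y0 * X1) + a2 * (X2 * Y1 - Y2 * X1) =
      (a0 * X0 + (a1 * X1 + a2 * X2)) * Y1 - (a0 * Y0 + (a1 * Y1 + a2 * Y2)) * X1 by ring.
    by rewrite -Ex -Ey; ring.
  lra.
have r2 : a1 * (X0 * Y1 - Y0 * X1) = - a2 * (X0 * Y2 - Y0 * X2).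
  have : a1 * (X1 * Y0 - Y1 * X0) + a2 * (X2 * Y0 - Y2 * X0) = 0.
    have -> : a1 * (X1 * Y0 - Y1 * X0) + a2 * (X2 * Y0 - Y2 * X0) =
      (a0 * X0 + (a1 * X1 + a2 * X2)) * Y0 - (a0 * Y0 + (a1 * Y1 + a2 * Y2)) * X0 by ring.
    by rewrite -Ex -Ey; ring.
  lra.
have n1 := congr1 (fun x => `|x|) r1; have n2 := congr1 (fun x => `|x|) r2.
rewrite /= !normrM (ger0_norm ha0) (ger0_norm ha2) N1 in n1.
rewrite /= !normrM normrN (ger0_norm ha1) (ger0_norm ha2) N2 in n2.
have a02 : a0 = a2 by apply: (mulIf D0).
have a12 : a1 = a2 by apply: (mulIf D0).
have : X2 = - X0 - X1 /\ Y2 = - Y0 - Y1.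
  rewrite a02 a12 in Ex Ey hs.
  have ha : a2 != 0 by apply/eqP => z; move: hs; rewrite z; lra.
  split; apply: (mulfI ha); [move: Ex | move: Ey]; rewrite /= => H; lra.
move=> [h1 h2]; congr (_,_); apply: (@intr_inj rat); rewrite rmorphB rmorphN /=; [exact: h1|exact: h2].
Qed.

Lemma parity_int (g' : nat) (n D k : int) : D = 2 * k + 1 ->
  (((2 * g')%N%:R : rat) * n%:~R / D%:~R) \is a Num.int ->
  ((g'%:R : rat) * n%:~R / D%:~R) \is a Num.int.
Proof.
move=> hD /intrP [z hz].
have Dr : (D%:~R : rat) = 2 * k%:~R + 1 by rewrite hD rmorphD rmorphM /=.
have D0 : (D%:~R : rat) != 0.
  rewrite intr_eq0 hD; apply/eqP => h; lia.
apply/intrP; exists (g'%:Z * n - z * k).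
rewrite rmorphB !rmorphM /=.
set G := (g'%:R : rat) * n%:~R.
have e1 : (g'%:Z%:~R : rat) = g'%:R by rewrite pmulrn.
rewrite ?e1 -/G.
have hz' : z%:~R * D%:~R = 2 * G.
  by rewrite -hz natrM /G; field.
have : G = (G - z%:~R * k%:~R) * D%:~R.
  rewrite Dr in hz' *.
  have -> : (G - z%:~R * k%:~R) * (2 * k%:~R + 1) = G + k%:~R * (2 * G - z%:~R * (2 * k%:~R + 1)) by ring.
  by rewrite hz' subrr mulr0 addr0.
by move=> E; rewrite {1}E mulfK.
Qed.

Lemma det_odd (x0 y0 x1 y1 : int) :
  ~ ((x0 %% 2)%Z = 0 /\ (y0 %% 2)%Z = 0) ->
  ~ ((x1 %% 2)%Z = 0 /\ (y1 %% 2)%Z = 0) ->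
  ~ (((-x0-x1) %% 2)%Z = 0 /\ ((-y0-y1) %% 2)%Z = 0) ->
  exists k : int, x0 * y1 - y0 * x1 = 2 * k + 1.
Proof.
have [a [ra [-> hra]]] : exists a ra : int, x0 = 2 * a + ra /\ (ra = 0 \/ ra = 1).
  by exists (x0 %/ 2)%Z, (x0 %% 2)%Z; lia.
have [b [rb [-> hrb]]] : exists a ra : int, y0 = 2 * a + ra /\ (ra = 0 \/ ra = 1).
  by exists (y0 %/ 2)%Z, (y0 %% 2)%Z; lia.
have [c [rc [-> hrc]]] : exists a ra : int, x1 = 2 * a + ra /\ (ra = 0 \/ ra = 1).
  by exists (x1 %/ 2)%Z, (x1 %% 2)%Z; lia.
have [d [rd [-> hrd]]] : exists a ra : int, y1 = 2 * a + ra /\ (ra = 0 \/ ra = 1).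
  by exists (y1 %/ 2)%Z, (y1 %% 2)%Z; lia.
case: hra => ->; case: hrb => ->; case: hrc => ->; case: hrd => -> ;
  move=> h0 h1 h2; try (exfalso; lia).
all: try (match goal with |- exists k, ?D = _ => exists ((D - 1) %/ 2)%Z end; lia).
Qed.


Lemma vert_ext (S T : pt -> Prop) u : (forall p, S p <-> T p) -> is_vertex S u -> is_vertex T u.
Proof.
move=> H [Su Nu]; split; first by apply/H.
move=> [a [b [t [Sa Sb ab tt E]]]]; apply: Nu.
by exists a, b, t; split => //; apply/H.
Qed.

Lemma prim_par (x y : int) : gcdz x y = 1%N -> ~ ((x %% 2)%Z = 0 /\ (y %% 2)%Z = 0).
Proof.
move=> H [hx hy].
have := dvdz_gcd 2 x y; rewrite H.
have -> : (2 %| x)%Z by apply/dvdz_mod0P.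
have -> : (2 %| y)%Z by apply/dvdz_mod0P.
by [].
Qed.

Theorem proposition4p3 (v0 v1 v2 : lpt) (g : nat) :
  fano_triangle v0 v1 v2 ->
  gorenstein_index v0 v1 v2 g ->
  reduced_weights v0 v1 v2 = (1, 1, 1)%N ->
  odd g.
Proof.
move=> [hdet p0 p1 p2 hint] [g1 hg gmin] hw.
have [E1 E2 pos] := weights_eq hw.
have hv2 := origin_sum E1 E2 pos hint.
have key := fun h (h1 : (1 <= h)%N) p => dilate_iff p h1 hv2.
clear hdet hint hw E1 E2.
move: v0 v1 v2 hv2 p0 p1 p2 pos key hg gmin => [x0 y0] [x1 y1] v2 -> /= p0 p1 p2 pos key hg gmin.
rewrite /primitive /= in p0 p1 p2.
have [k hk] := det_odd (prim_par p0) (prim_par p1) (prim_par p2).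
set X0 : rat := x0%:~R in key; set Y0 : rat := y0%:~R in key.
set X1 : rat := x1%:~R in key; set Y1 : rat := y1%:~R in key.
have D0 : X0 * Y1 - Y0 * X1 != 0.
  rewrite /X0 /X1 /Y0 /Y1 -!rmorphM -rmorphB /= intr_eq0.
  by rewrite -absz_eq0 -lt0n; move: pos; rewrite /Defs.detZ.
case og : (odd g) => //.
set g' := g./2.
have gg : g = (2 * g')%N by move: (odd_double_half g); rewrite og add0n -muln2 mulnC => <-.
have g'1 : (1 <= g')%N by move: g1; rewrite gg; case: (g') .
move: (gmin g' g'1) => H.
suff : (g <= g')%N by rewrite gg; lia.
apply: H.
move=> u Vu.
have Vk := vert_ext (key g' g'1) Vu.
have hg'pos : (0 : rat) < g'%:R by rewrite ltr0n.
have [c1 [c2 [hc hA hB]]] : exists c1 c2 : int,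
   [/\ (c1 = -1 /\ c2 = -1) \/ (c1 = 2 /\ c2 = -1) \/ (c1 = -1 /\ c2 = 2),
       al X0 Y0 u = c1%:~R * g'%:R & al X1 Y1 u = c2%:~R * g'%:R].
  case: (classify D0 hg'pos Vk) => [[-> ->]|[[-> ->]|[-> ->]]].
  - by exists (-1), (-1); split; [left|rewrite /= mulN1r|rewrite /= mulN1r].
  - by exists 2, (-1); split; [right; left|rewrite /=|rewrite /= mulN1r].
  - by exists (-1), 2; split; [right; right|rewrite /= mulN1r|rewrite /=].
have hgpos : (0 : rat) < g%:R by rewrite ltr0n.
set w := Mp X0 Y0 X1 Y1 (c1%:~R * g%:R) (c2%:~R * g%:R).
have Vw : is_vertex (Kset X0 Y0 X1 Y1 g%:R) w.
  apply: isvert => //; rewrite /w alM0 // alM1 //.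
  by case: hc => [[-> ->]|[[-> ->]|[-> ->]]] /=; [left|right;left|right;right]; split; ring.
have Vw' := vert_ext (fun p => iff_sym (key g g1 p)) Vw.
have [iw1 iw2] := hg w Vw'.
rewrite (Mal u D0) hA hB.
move: iw1 iw2; rewrite /w /Mp /integral_pt /= => iw1 iw2.
have hD : x0 * y1 - y0 * x1 = 2 * k + 1 by exact: hk.
have DD : X0 * Y1 - Y0 * X1 = (x0 * y1 - y0 * x1)%:~R by rewrite rmorphB !rmorphM.
rewrite DD in iw1 iw2 *.
have cf : forall (h : nat) (a b p q : int),
   (a%:~R * h%:R * p%:~R - b%:~R * h%:R * q%:~R : rat) = h%:R * (a * p - b * q)%:~R.
  by move=> *; rewrite rmorphB !rmorphM /=; ring.
rewrite /X0 /Y0 /X1 /Y1 !cf in iw1 iw2 *.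
rewrite gg in iw1 iw2.
by split; apply: (parity_int hD).
Qed.
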